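(* Let $\alpha,\beta,\gamma>0$ and let $X$ have the hyper-exponential (generalized gamma) density $$\rho(t)=\frac{\gamma\,\beta^{-\alpha/\gamma}}{\Gamma(\alpha/\gamma)}\,t^{\alpha-1}\exp(-t^\gamma/\beta),\qquad t>0.$$ Then, for every choice of the parameters $\alpha,\beta,\gamma>0$, the distribution of $X$ is $q$-moment determinate for every $q\in(0,1)$ (even though it is moment indeterminate in the classical sense when $\gamma\in(0,\tfrac12)$).
   Context: For $0<q<1$: a $q$-density of $X\ge0$ is a function $f$ on $(0,\infty)$ with $F_X(x)=x(1-q)\sum_{j\ge0}f(xq^j)q^j$ for all $x>0$ (one may take $f(t)=\frac{F_X(t)-F_X(qt)}{t(1-q)}$); the $q$-moments are $m_q(n;X)=(1-q)\sum_{j\in\mathbb{Z}}q^{j(n+1)}f(q^j)$, $n\in\mathbb{N}_0$; $P_X$ is $q$-moment determinate if every $Y$ with $q$-density $g$ and $m_q(k;Y)=m_q(k;X)$ for all $k\in\mathbb{N}_0$ satisfies $g(q^j)=f(q^j)$ for all $j\in\mathbb{Z}$. The moments of $X$ are $\mu_n=\beta^{n/\gamma}\Gamma((n+\alpha)/\gamma)/\Gamma(\alpha/\gamma)$. *)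

(* Defs.v *)
From Stdlib Require Import Reals Arith ZArith.
Open Scope R_scope.

(* Euler's Gamma function, characterised (for s > 0) by Gauss' product formula
   Gamma(s) = lim_{n->oo} n! n^s / (s (s+1) ... (s+n)). *)
Definition is_Gamma (s g : R) : Prop :=
  Un_cv (fun n => INR (Factorial.fact n) * Rpower (INR n) s / prod_f_R0 (fun k => s + INR k) n) g.

(* hyper-exponential (generalized gamma) density, G standing for Gamma(alpha/gamma) *)
Definition hyperexp_density (alpha beta gamma G t : R) : R :=
  gamma * Rpower beta (- (alpha / gamma)) / G * Rpower t (alpha - 1)
    * exp (- Rpower t gamma / beta).

(* F is the distribution function x |-> int_0^x rho(t) dt on (0,oo) of a
   nonnegative random variable with density rho (continuous on (0,oo)):
   F' = rho on (0,oo) and F(0+) = 0. *)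
Definition is_cdf_of_density (rho F : R -> R) : Prop :=
  (forall x, 0 < x -> derivable_pt_lim F x (rho x)) /\
  (forall eps, 0 < eps -> exists d, 0 < d /\ forall x, 0 < x < d -> Rabs (F x) < eps).

Definition is_cdf_nonneg (F : R -> R) : Prop :=
  (forall x y, x <= y -> F x <= F y) /\
  (forall x, x < 0 -> F x = 0) /\
  (forall x eps, 0 < eps -> exists d, 0 < d /\ forall y, x <= y < x + d -> Rabs (F y - F x) < eps) /\
  (forall eps, 0 < eps -> exists M, forall x, M <= x -> Rabs (F x - 1) < eps).

Definition is_q_density (q : R) (F f : R -> R) : Prop :=
  forall x, 0 < x ->
    exists s, infinite_sum (fun j => f (x * q ^ j) * q ^ j) s /\ F x = x * (1 - q) * s.

(* m is the n-th q-moment:  m = (1-q) sum_{j in Z} q^{j(n+1)} f(q^j),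
   the bilateral series being split into its j >= 0 and j < 0 parts,
   both required to converge. *)
Definition q_moment (q : R) (f : R -> R) (n : nat) (m : R) : Prop :=
  exists s1 s2,
    infinite_sum (fun j : nat => powerRZ q (Z.of_nat j * Z.of_nat (S n))
                                 * f (powerRZ q (Z.of_nat j))) s1 /\
    infinite_sum (fun j : nat => powerRZ q (- Z.of_nat (S j) * Z.of_nat (S n))
                                 * f (powerRZ q (- Z.of_nat (S j)))) s2 /\
    m = (1 - q) * (s1 + s2).

Definition q_moment_determinate (q : R) (F : R -> R) : Prop :=
  forall f, is_q_density q F f ->
  forall (G g : R -> R), is_cdf_nonneg G -> is_q_density q G g ->
    (forall k : nat, exists m, q_moment q f k m /\ q_moment q g k m) ->
    forall j : Z, g (powerRZ q j) = f (powerRZ q j).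

(* Main.v *)
Require Import Defs.
From Stdlib Require Import Reals Lra Lia.
From Coquelicot Require Import Coquelicot.
Open Scope R_scope.

Lemma Rabs_le_inv x y : Rabs x <= y -> -y <= x <= y.
Proof. unfold Rabs; destruct Rcase_abs; lra. Qed.

Lemma lim_le (u : nat -> R) l B N0 : Un_cv u l -> (forall N, (N0 <= N)%nat -> u N <= B) -> l <= B.
Proof.
  intros Hu HB. destruct (Rle_dec l B) as [h|h]; [exact h|].
  exfalso. destruct (Hu (l - B)) as [N HN]; [lra|].
  specialize (HN (max N N0) (Nat.le_max_l _ _)). specialize (HB (max N N0) (Nat.le_max_r _ _)).
  unfold R_dist in HN. apply Rabs_def2 in HN. lra.
Qed.

Lemma lim_ge (u : nat -> R) l B N0 : Un_cv u l -> (forall N, (N0 <= N)%nat -> B <= u N) -> B <= l.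
Proof.
  intros Hu HB. destruct (Rle_dec B l) as [h|h]; [exact h|].
  exfalso. destruct (Hu (B - l)) as [N HN]; [lra|].
  specialize (HN (max N N0) (Nat.le_max_l _ _)). specialize (HB (max N N0) (Nat.le_max_r _ _)).
  unfold R_dist in HN. apply Rabs_def2 in HN. lra.
Qed.

Lemma ser_geom (a : nat -> R) s r B : is_series a s -> 0 <= r < 1 -> 0 <= B ->
  (forall k, Rabs (a k) <= B * r ^ k) -> Rabs s <= B / (1 - r).
Proof.
  intros Hs Hr HB Ha. apply is_series_Reals in Hs.
  assert (Hp : forall J, Rabs (sum_f_R0 a J) <= B / (1 - r)).
  { intro J. eapply Rle_trans; [apply sum_f_R0_triangle|].
    eapply Rle_trans; [apply (sum_Rle _ (fun k => B * r ^ k)); intros; apply Ha|].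
    replace (sum_f_R0 (fun k => B * r ^ k) J) with (B * sum_f_R0 (fun k => r ^ k) J)
      by (clear; induction J; simpl; [ring| rewrite <- IHJ; ring]).
    rewrite tech3 by lra.
    assert (0 <= r ^ S J) by (apply pow_le; lra).
    unfold Rdiv. rewrite <- Rmult_assoc. apply Rmult_le_compat_r.
    - apply Rlt_le, Rinv_0_lt_compat; lra.
    - rewrite Rmult_comm. nra. }
  apply Rabs_le. split.
  - apply (lim_ge _ _ _ 0 Hs). intros N _. specialize (Hp N). apply Rabs_le_inv in Hp; lra.
  - apply (lim_le _ _ _ 0 Hs). intros N _. specialize (Hp N). apply Rabs_le_inv in Hp; lra.
Qed.

Lemma ser_term_le (a : nat -> R) s : is_series a s -> (forall k, 0 <= a k) ->
  (forall k, a k <= s) /\ 0 <= s.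
Proof.
  intros Hs Ha. apply is_series_Reals in Hs. split.
  - intro k. apply (lim_ge _ _ _ k Hs). intros N HN.
    induction HN.
    + destruct k; simpl. lra. assert (0 <= sum_f_R0 a k).
      { clear Hs. induction k; simpl; [apply Ha|]. specialize (Ha (S k)). lra. } lra.
    + simpl. specialize (Ha (S m)). lra.
  - apply (lim_ge _ _ _ 0 Hs). intros N _. induction N; simpl; [apply Ha|]. specialize (Ha (S N)). lra.
Qed.

Lemma ser_le_B (a : nat -> R) s B : is_series a s -> (forall J, sum_f_R0 a J <= B) -> s <= B.
Proof. intros Hs HB. apply is_series_Reals in Hs. apply (lim_le _ _ _ 0 Hs). intros; auto. Qed.
Lemma ser_ext (a b : nat -> R) l : is_series a l -> (forall n, a n = b n) -> is_series b l.
Proof. intros H E. exact (is_series_ext a b l E H). Qed.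

Lemma ser_eql (a : nat -> R) l l' : is_series a l -> l = l' -> is_series a l'.
Proof. intros H ->. exact H. Qed.

Definition ZS (a : Z -> R) (s : R) : Prop :=
  exists s1 s2 : R, is_series (fun k : nat => a (Z.of_nat k)) s1 /\
    is_series (fun k : nat => a (- Z.of_nat (S k))%Z) s2 /\ s = s1 + s2.

Lemma ZS_ext a b s : (forall j, a j = b j) -> ZS a s -> ZS b s.
Proof.
  intros H (s1 & s2 & H1 & H2 & ->). exists s1, s2. split; [|split]; auto.
  - apply (ser_ext _ _ _ H1). intros; auto.
  - apply (ser_ext _ _ _ H2). intros; auto.
Qed.

Lemma ZS_lin a b s u c : ZS a s -> ZS b u -> ZS (fun j => a j - c * b j) (s - c * u).
Proof.
  intros (s1 & s2 & H1 & H2 & ->) (u1 & u2 & K1 & K2 & ->).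
  exists (s1 - c * u1), (s2 - c * u2). split; [|split].
  - apply (is_series_minus _ _ _ _ H1 (is_series_scal c _ _ K1)).
  - apply (is_series_minus _ _ _ _ H2 (is_series_scal c _ _ K2)).
  - ring.
Qed.

Lemma ZS_scal a s c : ZS a s -> ZS (fun j => c * a j) (c * s).
Proof.
  intros (s1 & s2 & H1 & H2 & ->). exists (c * s1), (c * s2). split; [|split].
  - apply (is_series_scal c _ _ H1).
  - apply (is_series_scal c _ _ H2).
  - ring.
Qed.

Lemma ZS_up a s : ZS a s -> ZS (fun j => a (j + 1)%Z) s.
Proof.
  intros (s1 & s2 & H1 & H2 & ->). exists (s1 - a 0%Z), (s2 + a 0%Z). split; [|split].
  - apply (ser_ext (fun k => a (Z.of_nat (S k)))); [|intros; f_equal; lia].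
    apply (is_series_incr_1 (fun k => a (Z.of_nat k))).
    apply (ser_eql _ s1); [exact H1|]. unfold plus; simpl. ring.
  - apply (ser_ext (fun k => a (- Z.of_nat k)%Z)); [|intros; f_equal; lia].
    apply (is_series_decr_1 (fun k : nat => a (- Z.of_nat k)%Z)).
    apply (ser_eql _ s2); [|unfold plus, opp; simpl; ring].
    apply (ser_ext _ _ _ H2). intros n; f_equal; lia.
  - ring.
Qed.

Lemma ZS_down a s : ZS a s -> ZS (fun j => a (j - 1)%Z) s.
Proof.
  intros (s1 & s2 & H1 & H2 & ->). exists (s1 + a (-1)%Z), (s2 - a (-1)%Z). split; [|split].
  - apply (is_series_decr_1 (fun k : nat => a (Z.of_nat k - 1)%Z)).
    apply (ser_eql _ s1); [|unfold plus, opp; simpl; ring].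
    apply (ser_ext _ _ _ H1). intros n; f_equal; lia.
  - apply (ser_ext (fun k => a (- Z.of_nat (S (S k)))%Z)); [|intros; f_equal; lia].
    apply (is_series_incr_1 (fun k => a (- Z.of_nat (S k))%Z)).
    apply (ser_eql _ s2); [exact H2|]. unfold plus; simpl. ring.
  - ring.
Qed.

Lemma ZS_shift_nat a s m : ZS a s -> ZS (fun j => a (j + Z.of_nat m)%Z) s /\ ZS (fun j => a (j - Z.of_nat m)%Z) s.
Proof.
  intro H. induction m as [|m [IH1 IH2]].
  - split; apply (ZS_ext a); auto; intros j; f_equal; lia.
  - split.
    + apply (ZS_ext (fun j => (fun j => a (j + Z.of_nat m)%Z) (j + 1)%Z)).
      intros j; f_equal; lia. exact (ZS_up (fun j => a (j + Z.of_nat m)%Z) s IH1).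
    + apply (ZS_ext (fun j => (fun j => a (j - Z.of_nat m)%Z) (j - 1)%Z)).
      intros j; f_equal; lia. exact (ZS_down (fun j => a (j - Z.of_nat m)%Z) s IH2).
Qed.

Lemma ZS_shift a s t : ZS a s -> ZS (fun j => a (j + t)%Z) s.
Proof.
  intro H. destruct (Z.le_gt_cases 0 t).
  - apply (ZS_ext (fun j => a (j + Z.of_nat (Z.to_nat t))%Z)).
    intros j; f_equal; lia. apply (ZS_shift_nat a s _ H).
  - apply (ZS_ext (fun j => a (j - Z.of_nat (Z.to_nat (- t)))%Z)).
    intros j; f_equal; lia. apply (ZS_shift_nat a s _ H).
Qed.

Lemma pz_nat q m : powerRZ q (Z.of_nat m) = q ^ m.
Proof. symmetry; apply pow_powerRZ. Qed.

Lemma pz_pos q z : 0 < q -> 0 < powerRZ q z.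
Proof. intros; apply powerRZ_lt; auto. Qed.

Lemma pz_add q a b : 0 < q -> powerRZ q (a + b) = powerRZ q a * powerRZ q b.
Proof. intros; apply powerRZ_add; lra. Qed.

Lemma pz_mul_nat q z n : 0 < q -> powerRZ q (z * Z.of_nat n) = (powerRZ q z) ^ n.
Proof.
  intro Hq. induction n.
  - simpl. replace (z * 0)%Z with 0%Z by lia. reflexivity.
  - replace (z * Z.of_nat (S n))%Z with (z * Z.of_nat n + z)%Z by lia.
    rewrite pz_add, IHn by auto. simpl. ring.
Qed.

Lemma qdens_rel q F f : 0 < q < 1 -> is_q_density q F f ->
  forall x, 0 < x -> F x - F (q * x) = x * (1 - q) * f x.
Proof.
  intros Hq Hd x Hx.
  destruct (Hd x Hx) as (s & Hs & Es).
  destruct (Hd (q * x)) as (s' & Hs' & Es'). nra.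
  apply is_series_Reals in Hs. apply is_series_Reals in Hs'.
  assert (H1 : is_series (fun j => f (x * q ^ j) * q ^ j) (q * s' + f x)).
  { apply is_series_decr_1. apply (ser_eql _ (q * s')).
    apply (ser_ext _ _ _ (is_series_scal q _ _ Hs')).
    intros n. simpl. unfold scal; simpl; unfold mult; simpl.
    replace (q * x * q ^ n) with (x * (q * q ^ n)) by ring. ring.
    unfold plus, opp; simpl. rewrite Rmult_1_r, Rmult_1_r. ring. }
  apply is_series_unique in H1. apply is_series_unique in Hs. rewrite Hs in H1.
  rewrite Es, Es', H1. ring.
Qed.

Lemma exp_pow_nat u k : (0 < k)%nat -> exp u = (exp (u / INR k)) ^ k.
Proof.
  intro Hk. rewrite <- Rpower_pow by apply exp_pos. unfold Rpower. rewrite ln_exp. f_equal.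
  field. apply not_0_INR. lia.
Qed.

Lemma key_bound beta gamma c a k : 0 < beta -> 0 < gamma -> 1 <= c -> (1 <= k)%nat ->
  a <= gamma * INR k -> Rpower c a * exp (- Rpower c gamma / beta) <= (INR k * beta) ^ k.
Proof.
  intros Hb Hg Hc Hk Ha.
  set (u := Rpower c gamma / beta).
  assert (Hcg : 0 < Rpower c gamma) by (unfold Rpower; apply exp_pos).
  assert (Hu : 0 < u) by (unfold u; apply Rdiv_lt_0_compat; auto).
  assert (Hk' : 0 < INR k) by (apply lt_0_INR; lia).
  assert (E1 : (u / INR k) ^ k <= exp u).
  { rewrite (exp_pow_nat u k) by lia. apply pow_incr. split.
    - apply Rlt_le, Rdiv_lt_0_compat; auto.
    - pose proof (exp_ineq1_le (u / INR k)). lra. }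
  assert (P1 : 0 < (u / INR k) ^ k) by (apply pow_lt, Rdiv_lt_0_compat; auto).
  replace (- Rpower c gamma / beta) with (- u) by (unfold u; field; lra).
  rewrite exp_Ropp.
  assert (E2 : / exp u <= / (u / INR k) ^ k) by (apply Rinv_le_contravar; auto).
  assert (Ek : (Rpower c gamma) ^ k = Rpower c (gamma * INR k)).
  { rewrite <- Rpower_pow by auto. rewrite Rpower_mult. reflexivity. }
  assert (E3 : / (u / INR k) ^ k = (INR k * beta) ^ k * Rpower c (- (gamma * INR k))).
  { unfold u. replace (Rpower c gamma / beta / INR k) with (Rpower c gamma * / (INR k * beta)) by (field; lra).
    rewrite Rpow_mult_distr, pow_inv, Ek, Rpower_Ropp.
    assert (0 < Rpower c (gamma * INR k)) by (unfold Rpower; apply exp_pos).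
    assert (0 < (INR k * beta) ^ k) by (apply pow_lt; nra).
    field. split; lra. }
  assert (E4 : Rpower c a * Rpower c (- (gamma * INR k)) <= 1).
  { rewrite <- Rpower_plus. unfold Rpower.
    rewrite <- exp_0. apply exp_le_3 || idtac.
    destruct (Req_dec (exp ((a + - (gamma * INR k)) * ln c)) (exp 0)) as [e|e]; [lra|].
    assert (0 <= ln c) by (rewrite <- ln_1; apply ln_le; lra).
    assert ((a + - (gamma * INR k)) * ln c <= 0) by nra.
    destruct H0 as [h|h]; [left; apply exp_increasing; auto | rewrite h; lra]. }
  assert (0 < Rpower c a) by (unfold Rpower; apply exp_pos).
  assert (0 < (INR k * beta) ^ k) by (apply pow_lt; nra).
  rewrite E3 in E2.
  apply Rle_trans with (Rpower c a * ((INR k * beta) ^ k * Rpower c (- (gamma * INR k)))).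
  - apply Rmult_le_compat_l; lra.
  - nra.
Qed.

Lemma gamma_nonneg s g : 0 < s -> is_Gamma s g -> 0 <= g.
Proof.
  intros Hs Hg. unfold is_Gamma in Hg. apply (lim_ge _ _ _ 0 Hg). intros N _.
  assert (0 < prod_f_R0 (fun k => s + INR k) N).
  { induction N. simpl; lra.
    change (prod_f_R0 (fun k => s + INR k) (S N)) with (prod_f_R0 (fun k => s + INR k) N * (s + INR (S N))).
    assert (0 <= INR (S N)) by apply pos_INR. nra. }
  apply Rmult_le_pos.
  - apply Rmult_le_pos. apply pos_INR. unfold Rpower; left; apply exp_pos.
  - left; apply Rinv_0_lt_compat; auto.
Qed.

Lemma F_mvt rho F a b : is_cdf_of_density rho F -> 0 < a < b ->
  exists c, a < c < b /\ F b - F a = rho c * (b - a).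
Proof.
  intros [Hd _] Hab. destruct (MVT_cor2 F rho a b) as (c & E & Hc); try lra.
  intros c Hc. apply Hd. lra. exists c; auto.
Qed.

Lemma F_mono rho F a b : is_cdf_of_density rho F -> (forall t, 0 < t -> 0 <= rho t) ->
  0 < a -> a <= b -> F a <= F b.
Proof.
  intros H Hr Ha Hab. destruct Hab as [h|h]; [|subst; lra].
  destruct (F_mvt rho F a b H) as (c & Hc & E). lra.
  specialize (Hr c ltac:(lra)). nra.
Qed.

Lemma F_nonneg rho F x : is_cdf_of_density rho F -> (forall t, 0 < t -> 0 <= rho t) ->
  0 < x -> 0 <= F x.
Proof.
  intros H Hr Hx. destruct (Rle_dec 0 (F x)) as [h|h]; [exact h|]. exfalso.
  destruct H as [Hd Hz]. destruct (Hz (- F x)) as (d & Hd0 & Hdd). lra.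
  set (y := Rmin x (d / 2)).
  assert (0 < y) by (unfold y; apply Rmin_pos; lra).
  assert (y <= x) by (unfold y; apply Rmin_l).
  assert (y < d) by (unfold y; pose proof (Rmin_r x (d/2)); lra).
  specialize (Hdd y ltac:(lra)).
  pose proof (F_mono rho F y x (conj Hd Hz) Hr ltac:(lra) ltac:(lra)).
  apply Rabs_def2 in Hdd. lra.
Qed.

Lemma pow_le1' x n : 0 <= x <= 1 -> 0 <= x ^ n <= 1.
Proof. intro. induction n; simpl; nra. Qed.

Lemma pow_anti x m n : 0 <= x <= 1 -> (m <= n)%nat -> x ^ n <= x ^ m.
Proof.
  intros Hx Hmn. replace n with (m + (n - m))%nat by lia. rewrite pow_add.
  pose proof (pow_le1' x m Hx). pose proof (pow_le1' x (n - m) Hx). nra.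
Qed.

Fixpoint tri (N : nat) : nat := match N with O => O | S N' => (tri N' + S N')%nat end.

Section Core.
Variable q : R.
Hypothesis Hq : 0 < q < 1.

Fixpoint H (N : nat) (x : R) : R :=
  match N with O => 1 | S N' => H N' x * (1 - q ^ (S N') * x) end.

Lemma H_unit N x : 0 <= x <= 1 -> 0 <= H N x <= 1.
Proof.
  intro Hx. induction N; simpl. lra.
  pose proof (pow_le1' q (S N) ltac:(lra)).
  assert (0 <= q ^ S N * x <= 1) by nra. simpl in H1. nra.
Qed.

Lemma H_zero N x i : (1 <= i <= N)%nat -> q ^ i * x = 1 -> H N x = 0.
Proof.
  intros Hi Ex. induction N. lia.
  simpl. destruct (Nat.eq_dec i (S N)) as [->|ne].
  - simpl in Ex. rewrite Ex. ring.
  - rewrite IHN by lia. ring.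
Qed.

Lemma H_big N x : 1 <= q ^ N * x -> Rabs (H N x) <= q ^ (tri N) * x ^ N.
Proof.
  induction N; intro Hx; simpl. rewrite Rabs_R1; lra.
  assert (Hq1 : 1 <= q ^ N * x).
  { assert (0 < q ^ N) by (apply pow_lt; lra). simpl in Hx.
    assert (Hp : 0 < q * q ^ N) by (apply Rmult_lt_0_compat; lra).
    assert (0 < x) by nra. assert (0 < q ^ N * x) by (apply Rmult_lt_0_compat; lra).
    replace (q * q ^ N * x) with (q * (q ^ N * x)) in Hx by ring. nra. }
  specialize (IHN Hq1). rewrite Rabs_mult.
  assert (Rabs (1 - q * q ^ N * x) <= q * q ^ N * x).
  { simpl in Hx. rewrite Rabs_left1 by lra. lra. }
  rewrite pow_add. 
  assert (0 <= Rabs (H N x)) by apply Rabs_pos.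
  apply Rle_trans with (q ^ tri N * x ^ N * (q * q ^ N * x)).
  - apply Rmult_le_compat; auto. apply Rabs_pos.
  - simpl. right. ring.
Qed.

Lemma one_minus_exp x : 0 <= x <= q -> exp (- (x / (1 - q))) <= 1 - x.
Proof.
  intro Hx. rewrite exp_Ropp. pose proof (exp_ineq1_le (x / (1 - q))).
  assert (0 < 1 - q) by lra.
  assert (E : 1 <= (1 - x) * (1 + x / (1 - q))).
  { replace ((1 - x) * (1 + x / (1 - q))) with (1 + x * (q - x) / (1 - q)) by (field; lra).
    assert (0 <= x * (q - x) / (1 - q)) by (apply Rmult_le_pos; [nra| left; apply Rinv_0_lt_compat; lra]).
    lra. }
  assert (0 < 1 + x / (1 - q)) by (assert (0 <= x / (1 - q)) by (apply Rmult_le_pos; [lra| left; apply Rinv_0_lt_compat; lra]); lra).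
  apply Rle_trans with (/ (1 + x / (1 - q))).
  - apply Rinv_le_contravar; auto.
  - apply (Rmult_le_reg_r (1 + x / (1 - q))); auto. rewrite Rinv_l by lra. lra.
Qed.

Definition cq := exp (- (q / ((1 - q) * (1 - q)))).

Lemma H_one N : cq <= H N 1.
Proof.
  assert (C : forall N, exp (- ((q - q ^ (S N)) / ((1 - q) * (1 - q)))) <= H N 1).
  { clear N. intro N. induction N. simpl. replace (- ((q - q * 1) / ((1 - q) * (1 - q)))) with 0 by (field; lra).
    rewrite exp_0; lra.
    simpl H. 
    assert (0 <= q ^ S N <= q) by (split; [apply pow_le; lra| pose proof (pow_anti q 1 (S N) ltac:(lra) ltac:(lia)); simpl in *; lra]).
    pose proof (one_minus_exp (q ^ S N) H0).
    replace (- ((q - q ^ S (S N)) / ((1 - q) * (1 - q)))) with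
      (- ((q - q ^ (S N)) / ((1 - q) * (1 - q))) + - (q ^ S N / (1 - q))).
    2: { simpl. field. lra. }
    rewrite exp_plus. rewrite Rmult_1_r.
    apply Rmult_le_compat; try (left; apply exp_pos); auto. }
  apply Rle_trans with (2 := C N). unfold cq. 
  destruct (Rle_lt_or_eq_dec _ _ (Rle_refl 0)) as [h|_]; [lra|].
  assert (0 < q ^ S N) by (apply pow_lt; lra).
  assert (0 < (1 - q) * (1 - q)) by nra.
  destruct (Rle_dec (- (q / ((1 - q) * (1 - q)))) (- ((q - q ^ S N) / ((1 - q) * (1 - q))))) as [h|h].
  - destruct h as [h|h]; [left; apply exp_increasing; auto| rewrite h; lra].
  - exfalso. apply h. apply Ropp_le_contravar. unfold Rdiv. apply Rmult_le_compat_r.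
    left; apply Rinv_0_lt_compat; auto. lra.
Qed.

End Core.

Section Core2.
Variable q : R.
Hypothesis Hq : 0 < q < 1.
Variable e : Z -> R.
Variable K : nat -> R.
Hypothesis HK : forall n j, Rabs (e j) * powerRZ q (j * Z.of_nat n) <= K n.
Hypothesis HZ : forall n, ZS (fun j => powerRZ q (j * Z.of_nat n) * e j) 0.

Let pz j := powerRZ q j.

Lemma K_nonneg n : 0 <= K n.
Proof. eapply Rle_trans; [|apply (HK n 0%Z)]. simpl. rewrite Rmult_1_r. apply Rabs_pos. Qed.

Lemma Zh_step h : (forall n, ZS (fun j => powerRZ q (j * Z.of_nat n) * e j * h j) 0) ->
  forall c n, ZS (fun j => powerRZ q (j * Z.of_nat n) * e j * (h j * (1 - c * powerRZ q j))) 0.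
Proof.
  intros Hh c n. pose proof (ZS_lin _ _ _ _ c (Hh n) (Hh (S n))) as Z1.
  replace (0 - c * 0) with 0 in Z1 by ring.
  refine (ZS_ext _ _ _ _ Z1). intro j.
  cbv beta. replace (j * Z.of_nat (S n))%Z with (j * Z.of_nat n + j)%Z by lia.
  rewrite pz_add by lra. ring.
Qed.

Lemma ZH_all N n : ZS (fun j => powerRZ q (j * Z.of_nat n) * e j * H q N (powerRZ q j)) 0.
Proof.
  revert n. induction N; intro n.
  - refine (ZS_ext _ _ _ _ (HZ n)). intro j. simpl. ring.
  - pose proof (Zh_step _ IHN (q ^ S N) n) as Z1.
    refine (ZS_ext _ _ _ _ Z1). intro j. reflexivity.
Qed.

Lemma main_ineq N n1 : (1 <= n1)%nat ->
  cq q * Rabs (e 0%Z) <= K 1 * q ^ n1 / (1 - q) + K (S n1 + N + 1) * q ^ (tri N) * q / (1 - q).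
Proof.
  intro Hn1. set (n := S n1).
  destruct (ZH_all N n) as (s1 & s2 & H1 & H2 & E0).
  set (T := fun j => powerRZ q (j * Z.of_nat n) * e j * H q N (powerRZ q j)).
  fold T in H1, H2.
  assert (T0 : T 0%Z = e 0%Z * H q N 1) by (unfold T; simpl; ring).
  pose proof (pow_le1' q n1 ltac:(lra)) as Hr1.
  assert (Hr : q ^ n1 <= q) by (pose proof (pow_anti q 1 n1 ltac:(lra) Hn1); simpl in *; lra).
  assert (Hrp : 0 < q ^ n1) by (apply pow_lt; lra).
  assert (B1 : Rabs (s1 - T 0%Z) <= K 1 * q ^ n1 / (1 - q ^ n1)).
  { assert (S1 : is_series (fun k => T (Z.of_nat (S k))) (s1 - T 0%Z)).
    { apply (is_series_incr_1 (fun k => T (Z.of_nat k))). apply (ser_eql _ s1 _ H1).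
      unfold plus; simpl. ring. }
    replace (K 1 * q ^ n1 / (1 - q ^ n1)) with ((K 1 * q ^ n1) / (1 - q ^ n1)) by reflexivity.
    apply (ser_geom _ _ (q ^ n1) (K 1 * q ^ n1) S1).
    - lra.
    - pose proof (K_nonneg 1). nra.
    - intro k. unfold T. set (z := Z.of_nat (S k)).
      assert (Ez : powerRZ q z = q ^ S k) by apply pz_nat.
      pose proof (pow_le1' q (S k) ltac:(lra)).
      assert (0 < q ^ S k) by (apply pow_lt; lra).
      pose proof (H_unit q Hq N (powerRZ q z) ltac:(rewrite Ez; lra)) as HU.
      rewrite !Rabs_mult. rewrite (Rabs_right (powerRZ q _)) by (left; apply pz_pos; lra).
      rewrite (Rabs_right (H q N _)) by lra.
      rewrite pz_mul_nat by lra. rewrite Ez.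
      pose proof (HK 1 z) as HK1. rewrite pz_mul_nat, Ez in HK1 by lra. simpl pow in HK1 at 1.
      rewrite Rmult_1_r in HK1.
      assert (E2 : (q ^ S k) ^ n = q ^ S k * (q ^ n1 * (q ^ n1) ^ k)).
      { rewrite <- !pow_mult. rewrite <- !pow_add. f_equal. unfold n. lia. }
      rewrite E2. rewrite Ez in HU.
      assert (0 <= (q ^ n1) ^ k) by (apply pow_le; lra).
      assert (0 <= Rabs (e z)) by apply Rabs_pos.
      set (P := q ^ n1 * (q ^ n1) ^ k).
      assert (0 <= P) by (apply Rmult_le_pos; lra).
      change (q * q ^ k) with (q ^ S k) in HK1.
      set (Hv := H q N (q ^ S k)) in *.
      assert (Hw : 0 <= Rabs (e z) * q ^ S k) by (apply Rmult_le_pos; lra).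
      replace (K 1 * q ^ n1 * (q ^ n1) ^ k) with (K 1 * P) by (unfold P; ring).
      apply Rle_trans with ((Rabs (e z) * q ^ S k) * P).
      + replace (q ^ S k * P * Rabs (e z) * Hv) with ((Rabs (e z) * q ^ S k) * P * Hv) by ring.
        assert (0 <= Rabs (e z) * q ^ S k * P) by (apply Rmult_le_pos; lra). nra.
      + apply Rmult_le_compat_r; auto. }
  assert (B2 : Rabs s2 <= K (S n1 + N + 1) * q ^ (tri N) * q / (1 - q)).
  { apply (ser_geom _ _ q (K (S n1 + N + 1) * q ^ (tri N) * q) H2).
    - lra.
    - pose proof (K_nonneg (S n1 + N + 1)). pose proof (pow_le q (tri N) ltac:(lra)). 
      apply Rmult_le_pos; [apply Rmult_le_pos|]; lra.
    - intro k. unfold T. set (z := (- Z.of_nat (S k))%Z).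
      assert (Hqk : 0 < q ^ S k) by (apply pow_lt; lra).
      assert (Ez : powerRZ q z = / q ^ S k) by (unfold z; rewrite powerRZ_neg', pz_nat; reflexivity).
      set (x := powerRZ q z) in *.
      assert (Hx1 : q ^ S k * x = 1) by (rewrite Ez; field; lra).
      assert (Hxp : 0 < x) by (rewrite Ez; apply Rinv_0_lt_compat; auto).
      pose proof (K_nonneg (S n1 + N + 1)) as HKp.
      pose proof (pow_le q (tri N) ltac:(lra)) as Htp.
      assert (0 <= q ^ k) by (apply pow_le; lra).
      destruct (Nat.lt_ge_cases k N) as [hk|hk].
      + rewrite (H_zero q N x (S k)) by (auto; lia). rewrite Rmult_0_r, Rabs_R0.
        repeat apply Rmult_le_pos; lra.
      + assert (Hb : 1 <= q ^ N * x).
        { pose proof (pow_anti q N (S k) ltac:(lra) ltac:(lia)). nra. }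
        pose proof (H_big q Hq N x Hb) as HB.
        rewrite !Rabs_mult. rewrite (Rabs_right (powerRZ q _)) by (left; apply pz_pos; lra).
        rewrite pz_mul_nat by lra. fold x.
        pose proof (HK (S n1 + N + 1) z) as HKm. rewrite pz_mul_nat in HKm by lra. fold x in HKm.
        assert (Ex : x ^ n * x ^ N = x ^ (S n1 + N + 1) * q ^ S k).
        { unfold n. rewrite <- pow_add. rewrite (pow_add x (S n1 + N) 1).
          replace (x ^ 1) with x by (simpl; ring).
          replace (x ^ (S n1 + N) * x * q ^ S k) with (x ^ (S n1 + N) * (q ^ S k * x)) by ring.
          rewrite Hx1. ring. }
        assert (0 <= Rabs (e z)) by apply Rabs_pos.
        assert (0 <= x ^ n) by (apply pow_le; lra).
        apply Rle_trans with (x ^ n * Rabs (e z) * (q ^ tri N * x ^ N)).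
        * apply Rmult_le_compat_l; auto. apply Rmult_le_pos; auto.
        * replace (x ^ n * Rabs (e z) * (q ^ tri N * x ^ N)) with
            (Rabs (e z) * q ^ tri N * (x ^ n * x ^ N)) by ring.
          rewrite Ex.
          replace (Rabs (e z) * q ^ tri N * (x ^ (S n1 + N + 1) * q ^ S k)) with
            ((Rabs (e z) * x ^ (S n1 + N + 1)) * (q ^ tri N * q ^ S k)) by ring.
          replace (K (S n1 + N + 1) * q ^ tri N * q * q ^ k) with
            (K (S n1 + N + 1) * (q ^ tri N * q ^ S k)) by (simpl; ring).
          apply Rmult_le_compat_r; auto. apply Rmult_le_pos; lra. }
  assert (E1 : T 0%Z = - (s1 - T 0%Z) - s2) by lra.
  pose proof (H_one q Hq N) as Hc.
  assert (Hcq : 0 < cq q) by (unfold cq; apply exp_pos).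
  assert (A1 : cq q * Rabs (e 0%Z) <= Rabs (T 0%Z)).
  { rewrite T0, Rabs_mult, (Rabs_right (H q N 1)) by lra.
    pose proof (Rabs_pos (e 0%Z)). nra. }
  assert (A2 : Rabs (T 0%Z) <= Rabs (s1 - T 0%Z) + Rabs s2).
  { pose proof (Rabs_triang (- (s1 - T 0%Z)) (- s2)). rewrite !Rabs_Ropp in H0.
    replace (- (s1 - T 0%Z) + - s2) with (T 0%Z) in H0 by lra. exact H0. }
  assert (A3 : K 1 * q ^ n1 / (1 - q ^ n1) <= K 1 * q ^ n1 / (1 - q)).
  { unfold Rdiv. apply Rmult_le_compat_l.
    - pose proof (K_nonneg 1). nra.
    - apply Rinv_le_contravar; lra. }
  unfold n in *. lra.
Qed.
End Core2.

Lemma nat_big (r : R) : exists N : nat, r < INR N.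
Proof. destruct (INR_archimed 1 r) as [N HN]; [lra|]. exists N. lra. Qed.

Lemma quad_eventually a b c eps : 0 < a -> 0 < eps ->
  exists N0, forall N, (N0 <= N)%nat -> exp (- a * (INR N * INR N) + b * INR N + c) < eps.
Proof.
  intros Ha He.
  destruct (nat_big ((Rabs b + 1) / a + Rabs (c - ln eps) + 1)) as [N0 HN0].
  exists N0. intros N HN. apply le_INR in HN.
  set (x := INR N) in *.
  assert (h1 : (Rabs b + 1) / a <= x).
  { assert (0 <= Rabs (c - ln eps)) by apply Rabs_pos. lra. }
  assert (h2 : Rabs (c - ln eps) + 1 <= x).
  { assert (0 <= (Rabs b + 1) / a) by (apply Rmult_le_pos; [pose proof (Rabs_pos b); lra| left; apply Rinv_0_lt_compat; lra]). lra. }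
  assert (h3 : Rabs b + 1 <= a * x).
  { apply (Rmult_le_compat_l a) in h1; [|lra]. replace (a * ((Rabs b + 1) / a)) with (Rabs b + 1) in h1 by (field; lra). lra. }
  assert (hx : 0 <= x) by (pose proof (Rabs_pos (c - ln eps)); lra).
  assert (h4 : - a * (x * x) + b * x <= - x).
  { assert (b <= Rabs b) by apply RRle_abs.
    assert (x * (a * x) >= x * (b + 1)) by (apply Rle_ge, Rmult_le_compat_l; lra). nra. }
  assert (h5 : c - ln eps <= Rabs (c - ln eps)) by apply RRle_abs.
  rewrite <- (exp_ln eps He). apply exp_increasing. lra.
Qed.

Lemma ser_scal_R (c : R) (a : nat -> R) l : is_series a l -> is_series (fun n => c * a n) (c * l).
Proof. intro H. exact (is_series_scal c a l H). Qed.

Lemma qmom_ZS q u P n m : 0 < q -> (forall j, P j = powerRZ q j * (1 - q) * u (powerRZ q j)) ->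
  q_moment q u n m -> ZS (fun j => powerRZ q (j * Z.of_nat n) * P j) m.
Proof.
  intros Hq HP (s1 & s2 & H1 & H2 & Em).
  apply is_series_Reals in H1. apply is_series_Reals in H2.
  exists ((1 - q) * s1), ((1 - q) * s2). split; [|split].
  - apply (ser_ext _ _ _ (ser_scal_R (1 - q) _ _ H1)). intro k.
    rewrite HP.
    replace (Z.of_nat k * Z.of_nat (S n))%Z with (Z.of_nat k * Z.of_nat n + Z.of_nat k)%Z by lia.
    rewrite pz_add by lra. ring.
  - apply (ser_ext _ _ _ (ser_scal_R (1 - q) _ _ H2)). intro k.
    rewrite HP.
    replace (- Z.of_nat (S k) * Z.of_nat (S n))%Z with (- Z.of_nat (S k) * Z.of_nat n + - Z.of_nat (S k))%Z by lia.
    rewrite pz_add by lra. ring.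
  - rewrite Em. ring.
Qed.

Lemma ZS_term_le a s : ZS a s -> (forall j, 0 <= a j) -> forall j, a j <= s.
Proof.
  intros (s1 & s2 & H1 & H2 & ->) Ha j.
  destruct (ser_term_le _ _ H1 (fun k => Ha _)) as [T1 P1].
  destruct (ser_term_le _ _ H2 (fun k => Ha _)) as [T2 P2].
  destruct (Z.le_gt_cases 0 j).
  - specialize (T1 (Z.to_nat j)). replace (Z.of_nat (Z.to_nat j)) with j in T1 by lia. lra.
  - specialize (T2 (Z.to_nat (- j) - 1)%nat).
    replace (- Z.of_nat (S (Z.to_nat (- j) - 1)))%Z with j in T2 by lia. lra.
Qed.

Lemma INR_tri N : INR (tri N) = INR N * (INR N + 1) / 2.
Proof.
  induction N. simpl; lra.
  simpl tri. rewrite plus_INR, IHN, S_INR. field.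
Qed.

Definition Acoef alpha beta gamma G0 := gamma * Rpower beta (- (alpha / gamma)) / G0.
Definition Cn alpha beta gamma G0 q kap n :=
  Acoef alpha beta gamma G0 * (/ q) ^ (n + 2) * (INR (kap * (n + 1)) * beta) ^ (kap * (n + 1)).

Lemma neg_term_bound alpha beta gamma G0 F q kap n k :
  0 < alpha -> 0 < beta -> 0 < gamma -> 0 < q < 1 ->
  is_cdf_of_density (hyperexp_density alpha beta gamma G0) F ->
  0 <= Acoef alpha beta gamma G0 -> (1 <= kap)%nat -> 1 + alpha <= gamma * INR kap ->
  powerRZ q (- Z.of_nat (S k) * Z.of_nat n) *
    (F (powerRZ q (- Z.of_nat (S k))) - F (powerRZ q (- Z.of_nat (S k) + 1))) <=
  Cn alpha beta gamma G0 q kap n * q ^ S k.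
Proof.
  intros Ha Hb Hg Hq HF HA Hk1 Hkap.
  set (A := Acoef alpha beta gamma G0) in *.
  assert (Hqk : 0 < q ^ S k) by (apply pow_lt; lra).
  assert (Ex : powerRZ q (- Z.of_nat (S k)) = / q ^ S k) by (rewrite powerRZ_neg', pz_nat; reflexivity).
  set (x := powerRZ q (- Z.of_nat (S k))) in *.
  assert (Exq : powerRZ q (- Z.of_nat (S k) + 1) = q * x).
  { rewrite pz_add by lra. fold x. replace (powerRZ q 1) with q by (simpl; ring). ring. }
  rewrite Exq. rewrite pz_mul_nat by lra. fold x.
  assert (Hx : 0 < x) by (rewrite Ex; apply Rinv_0_lt_compat; auto).
  assert (Hqx : 1 <= q * x).
  { rewrite Ex. simpl. replace (q * / (q * q ^ k)) with (/ q ^ k) by (field; split; [apply pow_nonzero|]; lra).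
    pose proof (pow_le1' q k ltac:(lra)). assert (0 < q ^ k) by (apply pow_lt; lra).
    apply (Rmult_le_reg_r (q ^ k)); auto. rewrite Rinv_l by lra. lra. }
  destruct (F_mvt _ F (q * x) x HF) as (c & Hc & Emv). nra.
  rewrite Emv.
  set (p := (kap * (n + 1))%nat).
  set (rho := hyperexp_density alpha beta gamma G0).
  assert (Hrho : rho c = A * Rpower c (alpha - 1) * exp (- Rpower c gamma / beta)) by reflexivity.
  assert (Hrc : 0 <= rho c).
  { rewrite Hrho. apply Rmult_le_pos; [apply Rmult_le_pos; [auto| unfold Rpower; left; apply exp_pos]| left; apply exp_pos]. }
  assert (KB : Rpower c (INR (n + 2) + alpha - 1) * exp (- Rpower c gamma / beta) <= (INR p * beta) ^ p).
  { apply key_bound; auto; try lra.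
    - unfold p. nia.
    - unfold p. rewrite mult_INR, plus_INR, plus_INR. simpl. 
      pose proof (pos_INR n). nra. }
  assert (Hc0 : 0 < c) by lra.
  assert (E1 : c ^ (n + 2) * rho c = A * (Rpower c (INR (n + 2) + alpha - 1) * exp (- Rpower c gamma / beta))).
  { rewrite Hrho. rewrite <- (Rpower_pow (n + 2) c Hc0).
    replace (INR (n + 2) + alpha - 1) with (INR (n + 2) + (alpha - 1)) by ring.
    rewrite Rpower_plus. ring. }
  assert (B1 : c ^ (n + 2) * rho c <= A * (INR p * beta) ^ p).
  { rewrite E1. apply Rmult_le_compat_l; auto. }
  assert (B2 : x ^ (n + 2) <= (/ q) ^ (n + 2) * c ^ (n + 2)).
  { rewrite <- Rpow_mult_distr. apply pow_incr. split; [lra|].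
    apply (Rmult_le_reg_l q); [lra|]. rewrite <- Rmult_assoc, Rinv_r by lra. lra. }
  assert (B3 : x ^ (n + 2) * rho c <= Cn alpha beta gamma G0 q kap n).
  { unfold Cn. fold A. fold p.
    apply Rle_trans with ((/ q) ^ (n + 2) * (c ^ (n + 2) * rho c)).
    - rewrite <- Rmult_assoc. apply Rmult_le_compat_r; auto.
    - assert (0 <= (/ q) ^ (n + 2)) by (apply pow_le; left; apply Rinv_0_lt_compat; lra).
      replace (A * (/ q) ^ (n + 2) * (INR p * beta) ^ p) with ((/ q) ^ (n + 2) * (A * (INR p * beta) ^ p)) by ring.
      apply Rmult_le_compat_l; auto. }
  assert (Exk : q ^ S k = / x) by (rewrite Ex, Rinv_inv; reflexivity).
  rewrite Exk.
  assert (Exn : x ^ (n + 2) = x ^ n * x * x) by (rewrite pow_add; simpl; ring).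
  rewrite Exn in B3.
  apply (Rmult_le_reg_r x); auto.
  replace (Cn alpha beta gamma G0 q kap n * / x * x) with (Cn alpha beta gamma G0 q kap n) by (field; lra).
  assert (0 <= x ^ n) by (apply pow_le; lra).
  assert (x ^ n * (rho c * (x - q * x)) * x <= x ^ n * x * x * rho c).
  { assert (0 <= x ^ n * x * rho c) by (apply Rmult_le_pos; [apply Rmult_le_pos|]; lra).
    replace (x ^ n * (rho c * (x - q * x)) * x) with (x ^ n * x * rho c * (x - q * x)) by ring.
    replace (x ^ n * x * x * rho c) with (x ^ n * x * rho c * x) by ring.
    apply Rmult_le_compat_l; auto. nra. }
  lra.
Qed.

Lemma mom_bound alpha beta gamma G0 F q kap n m :
  0 < alpha -> 0 < beta -> 0 < gamma -> 0 < q < 1 ->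
  is_cdf_of_density (hyperexp_density alpha beta gamma G0) F ->
  0 <= Acoef alpha beta gamma G0 -> (1 <= kap)%nat -> 1 + alpha <= gamma * INR kap ->
  ZS (fun j => powerRZ q (j * Z.of_nat n) * (F (powerRZ q j) - F (powerRZ q (j + 1)))) m ->
  m <= F 1 + Cn alpha beta gamma G0 q kap n * q / (1 - q).
Proof.
  intros Ha Hb Hg Hq HF HA Hk1 Hkap (s1 & s2 & H1 & H2 & ->).
  assert (Hrho : forall t, 0 < t -> 0 <= hyperexp_density alpha beta gamma G0 t).
  { intros t _. apply Rmult_le_pos; [apply Rmult_le_pos; [exact HA| unfold Rpower; left; apply exp_pos]| left; apply exp_pos]. }
  assert (Hpz : forall j, 0 < powerRZ q j) by (intro; apply pz_pos; lra).
  assert (Hmono : forall j, 0 <= F (powerRZ q j) - F (powerRZ q (j + 1))).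
  { intro j. rewrite (pz_add q j 1) by lra. 
    assert (Eq1 : powerRZ q 1 = q) by (simpl; ring). rewrite Eq1.
    pose proof (Hpz j). pose proof (F_mono _ F (powerRZ q j * q) (powerRZ q j) HF Hrho ltac:(nra) ltac:(nra)). lra. }
  assert (S1 : s1 <= F 1).
  { apply (ser_le_B _ _ _ H1). intro J.
    assert (Tel : forall J, sum_f_R0 (fun k => F (powerRZ q (Z.of_nat k)) - F (powerRZ q (Z.of_nat k + 1))) J
                 = F 1 - F (powerRZ q (Z.of_nat (S J)))).
    { intro J'. induction J'. simpl. ring.
      rewrite tech5, IHJ'. cbv beta. replace (Z.of_nat (S J') + 1)%Z with (Z.of_nat (S (S J'))) by lia. ring. }
    apply Rle_trans with (sum_f_R0 (fun k => F (powerRZ q (Z.of_nat k)) - F (powerRZ q (Z.of_nat k + 1))) J).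
    - apply sum_Rle. intros k _. pose proof (Hmono (Z.of_nat k)) as Hm.
      set (Fd := F (powerRZ q (Z.of_nat k)) - F (powerRZ q (Z.of_nat k + 1))) in *.
      rewrite pz_mul_nat, pz_nat by lra.
      pose proof (pow_le1' (q ^ k) n (pow_le1' q k ltac:(lra))). nra.
    - rewrite Tel. pose proof (F_nonneg _ F (powerRZ q (Z.of_nat (S J))) HF Hrho (Hpz _)). lra. }
  assert (HC : 0 <= Cn alpha beta gamma G0 q kap n).
  { unfold Cn. apply Rmult_le_pos; [apply Rmult_le_pos|]; auto.
    - apply pow_le. left; apply Rinv_0_lt_compat; lra.
    - apply pow_le. apply Rmult_le_pos; [apply pos_INR| lra]. }
  assert (S2 : Rabs s2 <= Cn alpha beta gamma G0 q kap n * q / (1 - q)).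
  { apply (ser_geom _ _ q _ H2); [lra| apply Rmult_le_pos; lra|].
    intro k. rewrite Rabs_right.
    - rewrite Rmult_assoc. change (q * q ^ k) with (q ^ S k).
      apply (neg_term_bound alpha beta gamma G0 F q kap n k); auto.
    - apply Rle_ge, Rmult_le_pos; [left; auto| apply Hmono]. }
  pose proof (Rle_abs s2). lra.
Qed.

Lemma pow_exp z n : 0 < z -> z ^ n = exp (INR n * ln z).
Proof. intro Hz. rewrite <- Rpower_pow by auto. reflexivity. Qed.

Lemma term2_bound alpha beta gamma G0 q kap D F1 :
  0 < beta -> 0 < q < 1 -> 0 < D -> 0 <= F1 -> 0 <= Acoef alpha beta gamma G0 ->
  exists a b c, 0 < a /\ forall N : nat,
    D ^ (S (S N) + N + 1) * (2 * (F1 + Cn alpha beta gamma G0 q kap (S (S N) + N + 1) * q / (1 - q)))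
      * q ^ (tri N) * q / (1 - q) <= exp (- a * (INR N * INR N) + b * INR N + c).
Proof.
  intros Hb Hq HD HF1 HA. set (A := Acoef alpha beta gamma G0) in *.
  assert (Hlq : ln q < 0) by (rewrite <- ln_1; apply ln_increasing; lra).
  set (lam := - ln q).
  set (k := INR kap).
  assert (Hk : 0 <= k) by apply pos_INR.
  set (T := 1 + 16 * (k * k) * beta / lam).
  assert (Hlam : 0 < lam) by (unfold lam; lra).
  assert (HT : 1 <= T).
  { unfold T. assert (0 <= 16 * (k * k) * beta / lam) by (apply Rmult_le_pos; [nra| left; apply Rinv_0_lt_compat; lra]). lra. }
  assert (HlnT : 0 <= ln T) by (rewrite <- ln_1; apply ln_le; lra).
  assert (HkT : k * k * beta / T <= lam / 16).
  { apply (Rmult_le_reg_r T); [lra|]. unfold Rdiv at 1. rewrite Rmult_assoc, Rinv_l, Rmult_1_r by lra.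
    unfold T. replace (lam / 16 * (1 + 16 * (k * k) * beta / lam)) with (lam / 16 + k * k * beta) by (field; lra).
    lra. }
  set (W := 2 * (F1 + A * q / (1 - q)) * q / (1 - q)).
  assert (HW : 0 <= W).
  { unfold W. assert (0 <= A * q / (1 - q)) by (apply Rmult_le_pos; [nra| left; apply Rinv_0_lt_compat; lra]).
    apply Rmult_le_pos; [|left; apply Rinv_0_lt_compat; lra]. nra. }
  exists (lam / 4), (lam / 2 + 2 * Rabs (ln D) + 2 * lam + 2 * k * ln T),
    (6 * lam + 3 * Rabs (ln D) + 4 * k * ln T + ln (W + 1)).
  split; [lra|]. intro N.
  set (m := (S (S N) + N + 1)%nat). set (p := (kap * (m + 1))%nat).
  set (x := INR N). assert (Hx : 0 <= x) by apply pos_INR.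
  assert (Im : INR m = 2 * x + 3) by (unfold m, x; rewrite !plus_INR, !S_INR; simpl; ring).
  assert (Im2 : INR (m + 2) = 2 * x + 5) by (rewrite plus_INR, Im; simpl; ring).
  assert (Ip : INR p = k * (2 * x + 4)) by (unfold p, k; rewrite mult_INR, plus_INR, Im; simpl; ring).
  set (y := INR p * beta).
  assert (Hy : 0 <= y) by (unfold y; apply Rmult_le_pos; [apply pos_INR| lra]).
  assert (Y1 : y <= T * exp (y / T)).
  { pose proof (exp_ineq1_le (y / T)) as Hy1. apply (Rmult_le_compat_l T) in Hy1; [|lra].
    replace (T * (1 + y / T)) with (T + y) in Hy1 by (field; lra). lra. }
  assert (Y2 : y ^ p <= exp (INR p * ln T + INR p * y / T)).
  { apply Rle_trans with ((T * exp (y / T)) ^ p). apply pow_incr; lra.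
    rewrite pow_exp by (apply Rmult_lt_0_compat; [lra| apply exp_pos]).
    rewrite ln_mult, ln_exp by (lra || apply exp_pos). right. f_equal. field. lra. }
  assert (Hiq : (/ q) ^ (m + 2) = exp (INR (m + 2) * lam)).
  { rewrite pow_exp by (apply Rinv_0_lt_compat; lra). rewrite ln_Rinv by lra. reflexivity. }
  set (Zb := exp (INR (m + 2) * lam + (INR p * ln T + INR p * y / T))).
  assert (HZb : 1 <= Zb).
  { unfold Zb. rewrite <- exp_0. 
    assert (Hz : 0 <= INR (m + 2) * lam + (INR p * ln T + INR p * y / T)).
    { pose proof (pos_INR (m + 2)). pose proof (pos_INR p).
      assert (0 <= INR p * y / T) by (apply Rmult_le_pos; [nra| left; apply Rinv_0_lt_compat; lra]). nra. }
    destruct Hz as [h|h]; [left; apply exp_increasing; auto| rewrite <- h; lra]. }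
  assert (HCn : Cn alpha beta gamma G0 q kap m <= A * Zb).
  { unfold Cn. fold A. fold p. fold y. rewrite Rmult_assoc. apply Rmult_le_compat_l; auto.
    rewrite Hiq. unfold Zb. rewrite exp_plus. apply Rmult_le_compat_l; [left; apply exp_pos| exact Y2]. }
  assert (Inner : F1 + Cn alpha beta gamma G0 q kap m * q / (1 - q) <= (F1 + A * q / (1 - q)) * Zb).
  { assert (F1 <= F1 * Zb) by nra.
    assert (Cn alpha beta gamma G0 q kap m * q / (1 - q) <= A * q / (1 - q) * Zb).
    { unfold Rdiv. replace (A * q * / (1 - q) * Zb) with (A * Zb * (q * / (1 - q))) by ring.
      rewrite Rmult_assoc. apply Rmult_le_compat_r; auto.
      apply Rmult_le_pos; [lra| left; apply Rinv_0_lt_compat; lra]. }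
    lra. }
  assert (HDm : 0 < D ^ m) by (apply pow_lt; auto).
  assert (Hqt : 0 < q ^ tri N) by (apply pow_lt; lra).
  assert (Step1 : D ^ m * (2 * (F1 + Cn alpha beta gamma G0 q kap m * q / (1 - q))) * q ^ tri N * q / (1 - q)
                  <= (W + 1) * (D ^ m * Zb * q ^ tri N)).
  { apply Rle_trans with (W * (D ^ m * Zb * q ^ tri N)).
    - unfold W. unfold Rdiv.
      replace (D ^ m * (2 * (F1 + Cn alpha beta gamma G0 q kap m * q * / (1 - q))) * q ^ tri N * q * / (1 - q))
        with ((D ^ m * q ^ tri N * (2 * q * / (1 - q))) * (F1 + Cn alpha beta gamma G0 q kap m * q * / (1 - q))) by ring.
      replace (2 * (F1 + A * q * / (1 - q)) * q * / (1 - q) * (D ^ m * Zb * q ^ tri N))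
        with ((D ^ m * q ^ tri N * (2 * q * / (1 - q))) * ((F1 + A * q * / (1 - q)) * Zb)) by ring.
      apply Rmult_le_compat_l; [|exact Inner].
      assert (0 < / (1 - q)) by (apply Rinv_0_lt_compat; lra). 
      apply Rmult_le_pos; [nra| nra].
    - assert (0 <= D ^ m * Zb * q ^ tri N) by (apply Rmult_le_pos; [nra| lra]). nra. }
  eapply Rle_trans; [exact Step1|].
  rewrite (pow_exp D m HD), (pow_exp q (tri N)) by lra. unfold Zb.
  rewrite (Rmult_comm (W + 1)). rewrite <- (exp_ln (W + 1)) by lra. rewrite <- !exp_plus.
  assert (Eb : forall u v, u <= v -> exp u <= exp v).
  { intros u v [h|h]; [left; apply exp_increasing; auto| rewrite h; lra]. }
  apply Eb.
  rewrite INR_tri, Im, Im2. fold x. rewrite Ip. unfold y. rewrite Ip.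
  fold lam. replace (ln q) with (- lam) by (unfold lam; ring).
  assert (f1 : k * (2 * x + 4) * (k * (2 * x + 4) * beta) / T <= lam / 16 * ((2 * x + 4) * (2 * x + 4))).
  { replace (k * (2 * x + 4) * (k * (2 * x + 4) * beta) / T) with (k * k * beta / T * ((2 * x + 4) * (2 * x + 4))) by (field; lra).
    apply Rmult_le_compat_r; [nra| exact HkT]. }
  assert (f2 : (2 * x + 3) * ln D <= (2 * x + 3) * Rabs (ln D)).
  { apply Rmult_le_compat_l; [lra| apply RRle_abs]. }
  rewrite ln_exp. lra.
Qed.

Theorem mainTheorem8 :
  forall (alpha beta gamma G : R) (F : R -> R),
    0 < alpha -> 0 < beta -> 0 < gamma ->
    is_Gamma (alpha / gamma) G ->
    is_cdf_of_density (hyperexp_density alpha beta gamma G) F ->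
    forall q : R, 0 < q < 1 -> q_moment_determinate q F.
Proof.
  intros alpha beta gamma G0 F Ha Hb Hg HG0 HF q Hq.
  unfold q_moment_determinate. intros f Hf G g HG Hgd Hmom t.
  assert (HA : 0 <= Acoef alpha beta gamma G0).
  { unfold Acoef. pose proof (gamma_nonneg _ _ (Rdiv_lt_0_compat _ _ Ha Hg) HG0) as HG0p.
    assert (0 < gamma * Rpower beta (- (alpha / gamma))) by (apply Rmult_lt_0_compat; [lra| unfold Rpower; apply exp_pos]).
    destruct HG0p as [h|h].
    - left. apply Rdiv_lt_0_compat; auto.
    - rewrite <- h. unfold Rdiv. rewrite Rinv_0. lra. }
  assert (Hrho : forall t, 0 < t -> 0 <= hyperexp_density alpha beta gamma G0 t).
  { intros s _. apply Rmult_le_pos; [apply Rmult_le_pos; [exact HA| unfold Rpower; left; apply exp_pos]| left; apply exp_pos]. }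
  assert (Hpz : forall j, 0 < powerRZ q j) by (intro; apply pz_pos; lra).
  assert (Hpz1 : forall j, powerRZ q (j + 1) = q * powerRZ q j).
  { intro j. rewrite pz_add by lra. simpl. ring. }
  set (Pf := fun j => F (powerRZ q j) - F (powerRZ q (j + 1))).
  set (Pg := fun j => G (powerRZ q j) - G (powerRZ q (j + 1))).
  assert (EPf : forall j, Pf j = powerRZ q j * (1 - q) * f (powerRZ q j)).
  { intro j. unfold Pf. rewrite Hpz1. apply (qdens_rel q F f Hq Hf). auto. }
  assert (EPg : forall j, Pg j = powerRZ q j * (1 - q) * g (powerRZ q j)).
  { intro j. unfold Pg. rewrite Hpz1. apply (qdens_rel q G g Hq Hgd). auto. }
  assert (Pf0 : forall j, 0 <= Pf j).
  { intro j. unfold Pf. rewrite Hpz1. pose proof (Hpz j).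
    pose proof (F_mono _ F (q * powerRZ q j) (powerRZ q j) HF Hrho ltac:(nra) ltac:(nra)). lra. }
  assert (Pg0 : forall j, 0 <= Pg j).
  { intro j. unfold Pg. rewrite Hpz1. pose proof (Hpz j). destruct HG as [HGm _].
    pose proof (HGm (q * powerRZ q j) (powerRZ q j) ltac:(nra)). lra. }
  destruct (nat_big ((1 + alpha) / gamma)) as [kap Hkap].
  assert (Hkap' : 1 + alpha <= gamma * INR kap).
  { apply (Rmult_lt_compat_l gamma) in Hkap; [|lra].
    replace (gamma * ((1 + alpha) / gamma)) with (1 + alpha) in Hkap by (field; lra). lra. }
  assert (Hk1 : (1 <= kap)%nat).
  { destruct kap; [simpl in Hkap'; lra| lia]. }
  set (Mb := fun n => F 1 + Cn alpha beta gamma G0 q kap n * q / (1 - q)).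
  set (d := fun j => Pf j - Pg j).
  assert (HZd : forall n, ZS (fun j => powerRZ q (j * Z.of_nat n) * d j) 0).
  { intro n. destruct (Hmom n) as (m & Hm1 & Hm2).
    pose proof (qmom_ZS q f Pf n m ltac:(lra) EPf Hm1) as Z1.
    pose proof (qmom_ZS q g Pg n m ltac:(lra) EPg Hm2) as Z2.
    pose proof (ZS_lin _ _ _ _ 1 Z1 Z2) as Z3. replace (m - 1 * m) with 0 in Z3 by ring.
    refine (ZS_ext _ _ _ _ Z3). intro j. unfold d. ring. }
  assert (Hdb : forall n j, Rabs (d j) * powerRZ q (j * Z.of_nat n) <= 2 * Mb n).
  { intros n j. destruct (Hmom n) as (m & Hm1 & Hm2).
    pose proof (qmom_ZS q f Pf n m ltac:(lra) EPf Hm1) as Z1.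
    pose proof (qmom_ZS q g Pg n m ltac:(lra) EPg Hm2) as Z2.
    assert (Hp := Hpz (j * Z.of_nat n)%Z).
    pose proof (ZS_term_le _ _ Z1 ltac:(intro i; pose proof (Pf0 i); pose proof (Hpz (i * Z.of_nat n)%Z); nra) j) as T1.
    pose proof (ZS_term_le _ _ Z2 ltac:(intro i; pose proof (Pg0 i); pose proof (Hpz (i * Z.of_nat n)%Z); nra) j) as T2.
    pose proof (mom_bound alpha beta gamma G0 F q kap n m Ha Hb Hg Hq HF HA Hk1 Hkap' Z1) as MB.
    fold (Mb n) in MB.
    assert (Rabs (d j) <= Pf j + Pg j).
    { unfold d. pose proof (Pf0 j). pose proof (Pg0 j). unfold Rabs; destruct Rcase_abs; lra. }
    nra. }
  set (e := fun j => d (j + t)%Z).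
  set (D := powerRZ q (- t)).
  set (K := fun n => D ^ n * (2 * Mb n)).
  assert (HK : forall n j, Rabs (e j) * powerRZ q (j * Z.of_nat n) <= K n).
  { intros n j. unfold e, K. 
    replace (j * Z.of_nat n)%Z with ((j + t) * Z.of_nat n + (- t) * Z.of_nat n)%Z by lia.
    rewrite pz_add, (pz_mul_nat q (- t)) by lra. fold D.
    assert (0 < D ^ n) by (apply pow_lt; apply Hpz).
    pose proof (Hdb n (j + t)%Z). nra. }
  assert (HZ : forall n, ZS (fun j => powerRZ q (j * Z.of_nat n) * e j) 0).
  { intro n. pose proof (ZS_shift _ _ t (HZd n)) as Z1.
    pose proof (ZS_scal _ _ (D ^ n) Z1) as Z2. rewrite Rmult_0_r in Z2.
    refine (ZS_ext _ _ _ _ Z2). intro j. unfold e. cbv beta.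
    replace (j * Z.of_nat n)%Z with ((j + t) * Z.of_nat n + (- t) * Z.of_nat n)%Z by lia.
    rewrite pz_add, (pz_mul_nat q (- t)) by lra. fold D. ring. }
  assert (MI : forall N, cq q * Rabs (e 0%Z) <= K 1%nat * q ^ (S N) / (1 - q)
                 + K (S (S N) + N + 1)%nat * q ^ (tri N) * q / (1 - q)).
  { intro N. apply (main_ineq q Hq e K HK HZ N (S N)). lia. }
  assert (Hcq : 0 < cq q) by (unfold cq; apply exp_pos).
  assert (HD : 0 < D) by apply Hpz.
  assert (HF1 : 0 <= F 1) by (apply (F_nonneg _ F 1 HF Hrho); lra).
  destruct (term2_bound alpha beta gamma G0 q kap D (F 1) Hb Hq HD HF1 HA) as (a & b & c & Ha0 & Hab).
  assert (K1 : 0 <= K 1%nat).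
  { pose proof (HK 1%nat 0%Z) as Hk0. pose proof (Rabs_pos (e 0%Z)). simpl in Hk0. nra. }
  assert (Small : forall eps, 0 < eps -> cq q * Rabs (e 0%Z) < eps).
  { intros eps Heps.
    destruct (quad_eventually a b c (eps / 2) Ha0 ltac:(lra)) as [N2 HN2].
    destruct (pow_lt_1_zero q ltac:(rewrite Rabs_right; lra) (eps / 2 * (1 - q) / (K 1%nat + 1))) as [N1 HN1].
    { apply Rdiv_lt_0_compat; [nra| lra]. }
    set (N := Nat.max N1 N2).
    pose proof (MI N) as M. pose proof (Hab N) as AB. pose proof (HN2 N (Nat.le_max_r _ _)) as E2.
    pose proof (HN1 (S N) ltac:(unfold N; lia)) as E1.
    rewrite Rabs_right in E1 by (left; apply pow_lt; lra).
    assert (T1 : K 1%nat * q ^ S N / (1 - q) < eps / 2).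
    { assert (0 < q ^ S N) by (apply pow_lt; lra).
      apply (Rmult_lt_compat_l (K 1%nat + 1)) in E1; [|lra].
      replace ((K 1%nat + 1) * (eps / 2 * (1 - q) / (K 1%nat + 1))) with (eps / 2 * (1 - q)) in E1 by (field; lra).
      apply (Rmult_lt_reg_r (1 - q)); [lra|].
      replace (K 1%nat * q ^ S N / (1 - q) * (1 - q)) with (K 1%nat * q ^ S N) by (field; lra). nra. }
    unfold K at 2 in M. unfold Mb in M. lra. }
  assert (E0 : e 0%Z = 0).
  { destruct (Req_dec (e 0%Z) 0) as [h|h]; auto. exfalso.
    assert (0 < Rabs (e 0%Z)) by (apply Rabs_pos_lt; auto).
    specialize (Small (cq q * Rabs (e 0%Z)) ltac:(nra)). lra. }
  unfold e, d in E0. replace (0 + t)%Z with t in E0 by lia.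
  rewrite EPf, EPg in E0. pose proof (Hpz t).
  assert (powerRZ q t * (1 - q) <> 0) by nra.
  apply (Rmult_eq_reg_l (powerRZ q t * (1 - q))); auto. lra.
Qed.
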